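(* Let $g\ge 0$ and $n\ge 1$. The number of pseudo-3-regular graphs corresponding to (pants decompositions of) hyperbolic surfaces of genus $g$ with $n$ cusps is at most $n\,g^{3g}(3g-3+3n)^n$.
   Context: A pants decomposition of a finite-area hyperbolic surface of genus $g$ with $n$ cusps is a collection of disjoint simple closed geodesics whose complement is a disjoint union of pairs of pants (spheres with three holes, each hole being a boundary geodesic or a cusp). A connected graph with free edges (edges having a free, unattached end) is pseudo-3-regular if every node has exactly three emanating half-edges (a loop counts twice), which may or may not have a free end. The graph corresponding to a pants decomposition has one node per pair of pants, one half-edge per boundary component or cusp of that pair of pants; two half-edges are joined into an edge when the corresponding boundary geodesics are glued in the surface, and half-edges corresponding to cusps are free edges. *)

(* Defs.v *)
From mathcomp Require Import all_boot all_fingroup.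
Set Implicit Arguments. Unset Strict Implicit. Unset Printing Implicit Defensive.

(* Half-edge encoding of a pseudo-3-regular graph with V nodes:
   half-edges are 'I_(3*V); half-edge h emanates from node h %/ 3, so each
   node carries exactly three half-edges (a loop uses two of them).
   A permutation s that is an involution pairs half-edges into edges;
   a fixed point of s is a half-edge with free end, i.e. a free edge. *)

Definition hadj (V : nat) (s : {perm 'I_(3 * V)}) : rel 'I_(3 * V) :=
  fun h h' => (h %/ 3 == h' %/ 3) || (s h == h').

Definition pseudo3 (V : nat) (n : nat) (s : {perm 'I_(3 * V)}) : bool :=
  [&& [forall h : 'I_(3 * V), s (s h) == h],
      #|[set h | s h == h]| == n &
      [forall h : 'I_(3 * V), forall h' : 'I_(3 * V), connect (hadj s) h h']].

Definition graph_iso (V : nat) (s t : {perm 'I_(3 * V)}) : bool :=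
  [exists f : {perm 'I_(3 * V)},
     [forall h : 'I_(3 * V), forall h' : 'I_(3 * V), (h %/ 3 == h' %/ 3) == (f h %/ 3 == f h' %/ 3)]
     && [forall h : 'I_(3 * V), f (s h) == t (f h)]].

Definition graph_classes (V n : nat) : {set {set {perm 'I_(3 * V)}}} :=
  [set [set t | pseudo3 n t && graph_iso s t] | s in [set s | pseudo3 n s]].

(* Graphs corresponding to pants decompositions of surfaces of genus g with
   n cusps: one node per pair of pants; Euler characteristic gives
   V = 2g - 2 + n nodes (if 2g - 2 + n < 0 there is no such surface). *)
Definition num_pants_graphs (g n : nat) : nat :=
  if 2 <= 2 * g + n then #|graph_classes (2 * g + n - 2) n| else 0.

(* Main.v *)
Require Import Defs.
From Stdlib Require Import ZArith Lia.
From mathcomp Require Import all_boot all_fingroup.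
From mathcomp Require Import zify ring.

Ltac posi := repeat (apply Z.add_nonneg_nonneg || apply Z.mul_nonneg_nonneg); lia.

Lemma poly1Z (x y : Z) : (0 <= x)%Z -> (0 <= y)%Z ->
  ((x+1)*(3*(2*y+x+1)+3)*(3*(2*y+x+1)+3)*(3*(2*y+x+1)+2)*(3*(2*y+x+1)+1)
  <= 3*(2*y+x+1)*(x+2)*(x+2)*(3*y+3*x+6)*6*(2*y+x+2)*(3*y+x+2))%Z.
Proof.
move=> hx hy. apply Z.le_0_sub.
have -> : (3*(2*y+x+1)*(x+2)*(x+2)*(3*y+3*x+6)*6*(2*y+x+2)*(3*y+x+2) -
  (x+1)*(3*(2*y+x+1)+3)*(3*(2*y+x+1)+3)*(3*(2*y+x+1)+2)*(3*(2*y+x+1)+1) = 1008 + 5256*y + 9216*y*y + 6264*y*y*y + 1296*y*y*y*y + 3636*x + 14904*x*y + 19908*x*y*y + 9720*x*y*y*y + 1296*x*y*y*y*y + 5472*x*x + 17478*x*x*y + 17496*x*x*y*y + 6156*x*x*y*y*y + 648*x*x*y*y*y*y + 4437*x*x*x + 10638*x*x*x*y + 7398*x*x*x*y*y + 1512*x*x*x*y*y*y + 2052*x*x*x*x + 3348*x*x*x*x*y + 1242*x*x*x*x*y*y + 513*x*x*x*x*x + 432*x*x*x*x*x*y + 54*x*x*x*x*x*x)%Z by ring.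
posi.
Qed.

Lemma poly1 (a b : nat) :
  (a+1)*(3*(2*b+a+1)+3)^2*(3*(2*b+a+1)+2)*(3*(2*b+a+1)+1)
  <= 3*(2*b+a+1)*(a+2)^2*(3*b+3*a+6)*6*(2*b+a+2)*(3*b+a+2).
Proof.
rewrite !expnS !expn0.
have := poly1Z _ _ (Zle_0_nat a) (Zle_0_nat b).
lia.
Qed.

Lemma poly0Z (x : Z) : (0 <= x)%Z ->
  ((x+3)*(3*x+3+3)*(3*x+3+3)*(3*x+3+2)*(3*x+3+1) <= (3*x+3)*(x+4)*(x+4)*(3*x+9)*6*(x+2)*(x+1))%Z.
Proof.
move=> hx. apply Z.le_0_sub.
have -> : ((3*x+3)*(x+4)*(x+4)*(3*x+9)*6*(x+2)*(x+1) - (x+3)*(3*x+3+3)*(3*x+3+3)*(3*x+3+2)*(3*x+3+1) = 3024 + 11484*x + 16236*x*x + 11133*x*x*x + 3996*x*x*x*x + 729*x*x*x*x*x + 54*x*x*x*x*x*x)%Z by ring.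
posi.
Qed.

Lemma poly0 (a : nat) :
  (a+3)*(3*a+3+3)^2*(3*a+3+2)*(3*a+3+1) <= (3*a+3)*(a+4)^2*(3*a+9)*6*(a+2)*(a+1).
Proof.
rewrite !expnS !expn0.
have := poly0Z _ (Zle_0_nat a).
lia.
Qed.

Lemma polygZ (x : Z) : (0 <= x)%Z ->
  ((3*x+6)*(6*x+15)*(6*x+10)*(6*x+11)*(6*x+12)*(6*x+13)*(6*x+14)*(6*x+15)
  <= (6*x+9)*(3*x+9)*(x+3)*(x+3)*(x+3)*72*(2*x+4)*(2*x+5)*(3*x+5)*(3*x+6)*(3*x+7))%Z.
Proof.
move=> hx. apply Z.le_0_sub.
have -> : ((6*x+9)*(3*x+9)*(x+3)*(x+3)*(x+3)*72*(2*x+4)*(2*x+5)*(3*x+5)*(3*x+6)*(3*x+7) -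
  (3*x+6)*(6*x+15)*(6*x+10)*(6*x+11)*(6*x+12)*(6*x+13)*(6*x+14)*(6*x+15) = 337024800 + 1684864800*x + 3711581352*x*x + 4755996000*x*x*x + 3931109496*x*x*x*x + 2191160160*x*x*x*x*x + 833863248*x*x*x*x*x*x + 213700032*x*x*x*x*x*x*x + 35221392*x*x*x*x*x*x*x*x + 3359232*x*x*x*x*x*x*x*x*x + 139968*x*x*x*x*x*x*x*x*x*x)%Z by ring.
posi.
Qed.

Lemma polyg (c : nat) :
  (3*c+6)*(6*c+15)*(6*c+10)*(6*c+11)*(6*c+12)*(6*c+13)*(6*c+14)*(6*c+15)
  <= (6*c+9)*(3*c+9)*(c+3)^3*72*(2*c+4)*(2*c+5)*(3*c+5)*(3*c+6)*(3*c+7).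
Proof.
rewrite !expnS !expn0.
have := polygZ _ (Zle_0_nat c).
lia.
Qed.

Definition Sf m := m * m`!.
Definition Tf (n G Q V k : nat) := n * G * Q * (V`! * 3^V) * (n`! * k`! * 2^k).

Lemma comb (L R A B C D E K q q' : nat) : 0 < E -> A <= B -> C <= D -> q <= q' ->
  E * L = A * C -> B * D = E * (K * q) -> R = K * q' -> L <= R.
Proof.
move=> hE hAB hCD hq e1 e2 e3.
rewrite -(leq_pmul2l hE) e1 e3.
apply: leq_trans (leq_mul hAB hCD) _.
by rewrite e2 leq_mul2l leq_mul2l hq !orbT.
Qed.

Arguments comb {L R A B C D} E K {q q'}.

Lemma expn_mono m n e : m <= n -> m ^ e <= n ^ e.
Proof. by case: e => [|e] // h; rewrite leq_exp2r. Qed.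

Lemma fam1_step a b :
  Sf (3*(2*b+a+1)) <= Tf (a+1) ((b+1)^(3*(b+1))) ((3*b+3*a+3)^(a+1)) (2*b+a+1) (3*b+a+1) ->
  Sf (3*(2*b+a.+1+1)) <= Tf (a.+1+1) ((b+1)^(3*(b+1))) ((3*b+3*a.+1+3)^(a.+1+1)) (2*b+a.+1+1) (3*b+a.+1+1).
Proof.
move=> IH.
rewrite /Sf /Tf in IH *.
have -> : 3*(2*b+a.+1+1) = (3*(2*b+a+1)).+3 by lia.
have -> : 2*b+a.+1+1 = (2*b+a+1).+1 by lia.
have -> : 3*b+a.+1+1 = (3*b+a+1).+1 by lia.
have -> : a.+1+1 = (a+1).+1 by lia.
have -> : 3*b+3*a.+1+3 = 3*b+3*a+6 by lia.
rewrite !factS !expnS.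
apply: (comb ((a+1)*(3*(2*b+a+1)))
   ((a+1).+1 * (b+1)^(3*(b+1)) * ((2*b+a+1).+1 * (2*b+a+1)`! * (3 * 3^(2*b+a+1)))
          * ((a+1).+1 * (a+1)`! * ((3*b+a+1).+1 * (3*b+a+1)`!) * (2 * 2^(3*b+a+1))))
   _ (poly1 a b) IH (_ : (3*b+3*a+6) * (3*b+3*a+3)^(a+1) <= (3*b+3*a+6) * (3*b+3*a+6)^(a+1))).
- by rewrite muln_gt0 addn1 /=; lia.
- by rewrite leq_mul2l expn_mono ?orbT //; lia.
- ring.
- ring.
- ring.
Qed.

Lemma fam1_g c :
  Sf (3*(2*c.+1+0+1)) <= Tf (0+1) ((c.+1+1)^(3*(c.+1+1))) ((3*c.+1+3*0+3)^(0+1)) (2*c.+1+0+1) (3*c.+1+0+1) ->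
  Sf (3*(2*c.+2+0+1)) <= Tf (0+1) ((c.+2+1)^(3*(c.+2+1))) ((3*c.+2+3*0+3)^(0+1)) (2*c.+2+0+1) (3*c.+2+0+1).
Proof.
move=> IH.
rewrite /Sf /Tf in IH *.
have -> : 3*(2*c.+2+0+1) = ((6*c+9).+4).+2 by lia.
have e1 : 3*(2*c.+1+0+1) = 6*c+9 by lia.
have -> : 2*c.+2+0+1 = (2*c+3).+2 by lia.
have e2 : 2*c.+1+0+1 = 2*c+3 by lia.
have -> : 3*c.+2+0+1 = (3*c+4).+3 by lia.
have e3 : 3*c.+1+0+1 = 3*c+4 by lia.
have -> : 3*c.+2+3*0+3 = 3*c+9 by lia.
have e4 : 3*c.+1+3*0+3 = 3*c+6 by lia.
have -> : c.+2+1 = c+3 by lia.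
have e5 : c.+1+1 = c+2 by lia.
have -> : 3*(c+3) = 3 + 3*(c+2) by lia.
rewrite e1 e2 e3 e4 e5 in IH.
rewrite !expn1 in IH *.
rewrite (expnD (c+3) 3 (3*(c+2))) !factS !expnS.
apply: (comb ((3*c+6)*(6*c+9))
   ((0+1) * (3*c+9) * ((2*c+3).+2 * ((2*c+3).+1 * (2*c+3)`!) * (3 * (3 * 3^(2*c+3))))
          * ((0+1)`! * ((3*c+4).+3 * ((3*c+4).+2 * ((3*c+4).+1 * (3*c+4)`!))) * (2 * (2 * (2 * 2^(3*c+4))))))
   _ (polyg c) IH (_ : (c+3)^3 * (c+2)^(3*(c+2)) <= (c+3)^3 * (c+3)^(3*(c+2)))).
- by rewrite muln_gt0; lia.
- by rewrite leq_mul2l expn_mono ?orbT //; lia.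
- ring.
- ring.
- ring.
Qed.

Definition F1 a b := Sf (3*(2*b+a+1)) <= Tf (a+1) ((b+1)^(3*(b+1))) ((3*b+3*a+3)^(a+1)) (2*b+a+1) (3*b+a+1).

Lemma F1_all a b : F1 a b.
Proof.
elim: a => [|a IH]; last exact: fam1_step.
case: b => [|b]; first by [].
elim: b => [|c IHc]; last exact: fam1_g.
rewrite /F1 /Sf /Tf.
change (9 * 9`! <= 1 * 2^6 * 6^1 * (3`! * 3^3) * (1`! * 4`! * 2^4)).
rewrite !factS fact0 !expnS expn0. lia.
Qed.

Definition F0 a := Sf (3*a+3) <= Tf (a+3) 1 ((3*a+6)^(a+3)) (a+1) a.

Lemma F0_all a : F0 a.
Proof.
elim: a => [|a IH]; first by [].
rewrite /F0 /Sf /Tf in IH *.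
have -> : 3*a.+1+3 = (3*a+3).+3 by lia.
have -> : a.+1+3 = (a+3).+1 by lia.
have -> : 3*a.+1+6 = 3*a+9 by lia.
have -> : a.+1+1 = (a+1).+1 by lia.
rewrite !factS !expnS.
apply: (comb ((a+3)*(3*a+3))
   ((a+3).+1 * 1 * ((a+1).+1*(a+1)`!*(3*3^(a+1))) * ((a+3).+1*(a+3)`!*(a.+1*a`!)*(2*2^a)))
   _ (poly0 a) IH (_ : (3*a+9) * (3*a+6)^(a+3) <= (3*a+9) * (3*a+9)^(a+3))).
- by rewrite muln_gt0; lia.
- by rewrite leq_mul2l expn_mono ?orbT //; lia.
- ring.
- ring.
- ring.
Qed.

Lemma arith_main g n : 1 <= n -> 3 <= 2*g+n ->
  Sf (3*(2*g+n-2)) <= Tf n (g^(3*g)) ((3*g+3*n-3)^n) (2*g+n-2) (3*g+n-3).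
Proof.
move=> hn hV.
case: g hV => [|b] hV.
  have [a ->] : exists a, n = a+3 by exists (n-3); lia.
  have := F0_all a; rewrite /F0.
  have -> : 3*(2*0+(a+3)-2) = 3*a+3 by lia.
  have -> : 2*0+(a+3)-2 = a+1 by lia.
  have -> : 3*0+(a+3)-3 = a by lia.
  have -> : 3*0+3*(a+3)-3 = 3*a+6 by lia.
  by move=> h; exact: h.
have [a ->] : exists a, n = a+1 by exists (n-1); lia.
have := F1_all a b; rewrite /F1.
have -> : 3*(2*b.+1+(a+1)-2) = 3*(2*b+a+1) by lia.
have -> : 2*b.+1+(a+1)-2 = 2*b+a+1 by lia.
have -> : 3*b.+1+(a+1)-3 = 3*b+a+1 by lia.
have -> : 3*b.+1+3*(a+1)-3 = 3*b+3*a+3 by lia.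
by rewrite !addn1 => h; exact: h.
Qed.

Set Implicit Arguments. Unset Strict Implicit. Unset Printing Implicit Defensive.

Definition invs m n := [set s : {perm 'I_m} | [forall h, s (s h) == h] && (#|[set h | s h == h]| == n)].

Lemma card_pairs (I J : finType) (P : pred I) (Q : I -> pred J) :
  #|[set p : I * J | P p.1 && Q p.1 p.2]| = \sum_(i | P i) #|[set j | Q i j]|.
Proof.
rewrite -sum1dep_card -(pair_big_dep P Q (fun _ _ => 1)).
by apply: eq_bigr => i _; rewrite sum1dep_card.
Qed.

Lemma sum_const_cond (I : finType) (P : pred I) c : \sum_(i | P i) c = #|[set i | P i]| * c.
Proof. by rewrite -sum_nat_const; apply: eq_bigl => i; rewrite inE. Qed.

Section Step.
Variables (m n : nat).

Definition tw (p : {perm 'I_m} * 'I_m) : {perm 'I_m} * ('I_m * 'I_m) :=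
  ((p.1 * tperm p.2 (p.1 p.2))%g, (p.2, p.1 p.2)).

Lemma tw_inj : injective tw.
Proof.
move=> [s a] [s' a'] [e1 e2 e3] /=.
subst a'; rewrite /= e3 in e1; by move/mulIg: e1 => ->.
Qed.

Lemma tw_mem s a : s \in invs m n -> s a != a -> tw (s, a) \in
  [set q : {perm 'I_m} * ('I_m * 'I_m) | (q.1 \in invs m n.+2) &&
      ((q.1 q.2.1 == q.2.1) && (q.1 q.2.2 == q.2.2) && (q.2.1 != q.2.2))].
Proof.
rewrite inE => /andP [/forallP sinv /eqP sfix] hsa.
set b := s a.
have sb : s b = a by apply/eqP/sinv.
have hab : a != b by rewrite eq_sym.
set t := (s * tperm a b)%g.
have ta : t a = a by rewrite permM -/b tpermR.
have tb : t b = b by rewrite permM sb tpermL.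
have sinvE h : s (s h) = h by apply/eqP.
have tD x : x != a -> x != b -> t x = s x.
  move=> xa xb; rewrite permM tpermD //.
  - apply/eqP => e; move/eqP: xb; apply; by rewrite -[x]sinvE -e.
  - apply/eqP => e; move/eqP: xa; apply; by rewrite -[x]sinvE -e sb.
have sxa x : x != b -> s x != a.
  by move=> xb; apply/eqP => e; move/eqP: xb; apply; rewrite -[x]sinvE e.
have sxb x : x != a -> s x != b.
  by move=> xa; apply/eqP => e; move/eqP: xa; apply; rewrite -[x]sinvE e sb.
have fixE : [set h | t h == h] = a |: (b |: [set h | s h == h]).
  apply/setP => x; rewrite !inE.
  have [->|xa] := eqVneq x a; first by rewrite ta eqxx.
  have [->|xb] := eqVneq x b; first by rewrite tb eqxx.
  by rewrite tD.
rewrite inE /= -/b -/t ta tb hab !eqxx /= andbT inE.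
apply/andP; split.
  apply/forallP => x.
  have [->|xa] := eqVneq x a; first by rewrite !ta.
  have [->|xb] := eqVneq x b; first by rewrite !tb.
  by rewrite tD // tD ?sinvE ?sxa ?sxb.
rewrite fixE cardsU1 cardsU1 sfix !inE negb_or hab.
by rewrite sb hsa hab.
Qed.

Lemma inv_step : #|invs m n| * (m - n) <= n.+2 * n.+1 * #|invs m n.+2|.
Proof.
set P' := [set p : {perm 'I_m} * 'I_m | (p.1 \in invs m n) && (p.1 p.2 != p.2)].
set Q' := [set q : {perm 'I_m} * ('I_m * 'I_m) | (q.1 \in invs m n.+2) &&
      ((q.1 q.2.1 == q.2.1) && (q.1 q.2.2 == q.2.2) && (q.2.1 != q.2.2))].
have cP : #|P'| = #|invs m n| * (m - n).
  rewrite /P' (card_pairs (fun s : {perm 'I_m} => s \in invs m n) (fun s a => s a != a)).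
  rewrite (eq_bigr (fun _ => m - n)); last first.
    move=> s; rewrite inE => /andP [_ /eqP sfix].
    have := cardsC [set h | s h == h]; rewrite sfix card_ord => hc.
    have -> : #|[set j | s j != j]| = #|~: [set h | s h == h]|.
      by apply: eq_card => x; rewrite !inE.
    lia.
  rewrite sum_const_cond; congr (_ * _); apply: eq_card => x; by rewrite inE.
have cQ : #|Q'| = #|invs m n.+2| * (n.+2 * n.+1).
  rewrite /Q' (card_pairs (fun s : {perm 'I_m} => s \in invs m n.+2) (fun s (j : 'I_m * 'I_m) => (s j.1 == j.1) && (s j.2 == j.2) && (j.1 != j.2))).
  rewrite (eq_bigr (fun _ => n.+2 * n.+1)); last first.
    move=> t; rewrite inE => /andP [_ /eqP tfix].
    have -> : #|[set j : 'I_m * 'I_m | (t j.1 == j.1) && (t j.2 == j.2) && (j.1 != j.2)]|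
       = #|[set j : 'I_m * 'I_m | (t j.1 == j.1) && ((t j.2 == j.2) && (j.1 != j.2))]|.
      by apply: eq_card => x; rewrite !inE andbA.
    rewrite (card_pairs (fun a => t a == a) (fun a b => (t b == b) && (a != b))) (eq_bigr (fun _ => n.+1)); last first.
      move=> a ta.
      have := cardsD1 a [set h | t h == h]; rewrite tfix inE ta add1n => -[->].
      apply: eq_card => x; by rewrite !inE andbC eq_sym.
    by rewrite sum_const_cond tfix mulnC.
  rewrite sum_const_cond; congr (_ * _); apply: eq_card => x; by rewrite inE.
rewrite -cP mulnC -cQ -(card_imset P' tw_inj).
apply: subset_leq_card; apply/subsetP => q /imsetP [[s a] hp ->].
move: hp; rewrite inE /= => /andP [hs ha]; exact: tw_mem.
Qed.
End Step.

Lemma invs_top m : #|invs m m| <= 1.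
Proof.
rewrite -(cards1 (1%g : {perm 'I_m})); apply: subset_leq_card; apply/subsetP => s.
rewrite !inE => /andP [_ /eqP hf].
have hT : [set h | s h == h] = setT.
  apply/eqP; by rewrite eqEcard subsetT cardsT card_ord hf leqnn.
apply/eqP; apply/permP => x; rewrite perm1.
by have := in_setT x; rewrite -hT inE => /eqP.
Qed.

Lemma invs_bound m k : 2*k <= m -> #|invs m (m - 2*k)| * (m - 2*k)`! * k`! * 2^k <= m`!.
Proof.
elim: k => [|k IH] hk.
  rewrite muln0 subn0 fact0 expn0 !muln1.
  by rewrite -{2}(mul1n m`!) leq_mul2r invs_top orbT.
have hk' : 2*k <= m by lia.
have e : m - 2*k = (m - 2*k.+1).+2 by lia.
have hs := inv_step m (m - 2*k.+1).
have hmn : m - (m - 2*k.+1) = 2 * k.+1 by lia.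
rewrite hmn in hs.
apply: leq_trans (IH hk'); rewrite e.
set X := #|invs m (m - 2*k.+1)|; set Y := #|invs m (m - 2*k.+1).+2|.
set q := m - 2*k.+1.
rewrite !factS expnS.
apply: (@leq_trans (X * (2*k.+1) * (q`! * k`! * 2^k))).
  by rewrite eq_leq //; ring.
apply: leq_trans (leq_mul hs (leqnn _)) _.
by rewrite eq_leq //; ring.
Qed.

Lemma connect_pres (T : finType) (e1 e2 : rel T) (g : T -> T) :
  (forall x y, e1 x y -> e2 (g x) (g y)) -> forall x y, connect e1 x y -> connect e2 (g x) (g y).
Proof.
move=> H x y /connectP [p pth ->] {y}.
elim: p x pth => [|z p IH] x /=; first by rewrite connect0.
move=> /andP [exz pz]; apply: connect_trans (connect1 (H _ _ exz)) (IH _ pz).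
Qed.

Lemma connect_prop (T : finType) (e : rel T) (P : pred T) :
  (forall x y, P x -> e x y -> P y) -> forall x y, connect e x y -> P x -> P y.
Proof.
move=> H x y /connectP [p pth ->] {y}.
elim: p x pth => [|z p IH] x //= /andP [exz pz] Px; exact: IH pz (H _ _ Px exz).
Qed.

Section Graph.
Variable V : nat.
Local Notation H := ('I_(3 * V)).

Lemma node_lt (x : H) : x %/ 3 < V.
Proof. rewrite ltn_divLR //; have := ltn_ord x; lia. Qed.

Definition node (x : H) : 'I_V := Ordinal (node_lt x).

Lemma mkf_lt (p : {perm 'I_V}) (r : {ffun 'I_V -> 'I_3}) (x : H) :
  3 * p (node x) + (x %% 3 + r (node x)) %% 3 < 3 * V.
Proof.
have h1 := ltn_ord (p (node x)).
have h2 : (x %% 3 + r (node x)) %% 3 < 3 by rewrite ltn_mod.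
lia.
Qed.

Definition mkf p r (x : H) : H := Ordinal (mkf_lt p r x).

Lemma mkf_div p r x : mkf p r x %/ 3 = p (node x).
Proof.
rewrite /= mulnC divnMDl // divn_small ?addn0 //. by rewrite ltn_mod.
Qed.

Lemma mkf_mod p r x : mkf p r x %% 3 = (x %% 3 + r (node x)) %% 3.
Proof. by rewrite /= mulnC modnMDl modn_mod. Qed.

Lemma mod3_cancel (a b c : nat) : a < 3 -> b < 3 -> (a + c) %% 3 = (b + c) %% 3 -> a = b.
Proof.
move=> ha hb /eqP; rewrite eqn_modDr => /eqP.
by rewrite !modn_small.
Qed.

Lemma mkf_inj p r : injective (mkf p r).
Proof.
move=> x y e.
have ed : p (node x) = p (node y) by apply: val_inj; rewrite /= -(mkf_div p r x) -(mkf_div p r y) e.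
have en : node x = node y by apply: perm_inj ed.
have em : (x %% 3 + r (node x)) %% 3 = (y %% 3 + r (node x)) %% 3.
  by rewrite -(mkf_mod p r x) e mkf_mod -en.
have := mod3_cancel (ltn_mod x 3) (ltn_mod y 3) em => exy.
apply: ord_inj; rewrite (divn_eq x 3) (divn_eq y 3) exy.
by have := congr1 val en => /= ->.
Qed.

Definition mkp p r : {perm H} := perm (@mkf_inj p r).

Lemma conjE (s f : {perm H}) x : (f^-1 * s * f)%g x = f (s ((f^-1)%g x)).
Proof. by rewrite !permM. Qed.

Lemma conjEf (s f : {perm H}) h : (f^-1 * s * f)%g (f h) = f (s h).
Proof. by rewrite conjE permK. Qed.

Lemma mkp_div p r x : mkp p r x %/ 3 = p (node x).
Proof. by rewrite permE mkf_div. Qed.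

Lemma mkp_part p r (x y : H) : (x %/ 3 == y %/ 3) == (mkp p r x %/ 3 == mkp p r y %/ 3).
Proof.
rewrite !mkp_div.
have -> : (val (p (node x)) == val (p (node y))) = (p (node x) == p (node y)) by [].
by rewrite (inj_eq perm_inj).
Qed.

Lemma conj_pseudo3 (n : nat) (s f : {perm H}) :
  (forall x y : H, x %/ 3 == y %/ 3 -> f x %/ 3 == f y %/ 3) ->
  pseudo3 n s -> pseudo3 n (f^-1 * s * f)%g.
Proof.
move=> hf /and3P [/forallP sinv /eqP sfix /forallP scon].
set t := (f^-1 * s * f)%g.
apply/and3P; split.
- apply/forallP => x; rewrite /t !conjE permK.
  by rewrite (eqP (sinv _)) permKV.
- have -> : [set h | t h == h] = (f^-1)%g @^-1: [set h | s h == h].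
    apply/setP => h; rewrite !inE /t conjE.
    by rewrite -(inj_eq (@perm_inj _ (f^-1)%g)) permK.
  by rewrite card_preimset ?sfix //; exact: perm_inj.
- apply/forallP => x; apply/forallP => y.
  rewrite -(permKV f x) -(permKV f y).
  apply: (connect_pres (e1 := hadj s)); last by have := scon ((f^-1)%g x) => /forallP; apply.
  move=> u v /orP [huv|/eqP <-]; apply/orP; [left; exact: hf | right].
  by rewrite /t conjEf.
Qed.

Lemma iso_sym (s t : {perm H}) : graph_iso s t -> graph_iso t s.
Proof.
case/existsP => f /andP [/forallP hp /forallP hc].
apply/existsP; exists (f^-1)%g; apply/andP; split.
  apply/forallP => h; apply/forallP => h'.
  have := hp ((f^-1)%g h) => /forallP /(_ ((f^-1)%g h')); rewrite !permKV.
  by move/eqP => ->.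
apply/forallP => h; apply/eqP.
have := hc ((f^-1)%g h); rewrite permKV => /eqP <-.
by rewrite permK.
Qed.

Lemma iso_trans (s t u : {perm H}) : graph_iso s t -> graph_iso t u -> graph_iso s u.
Proof.
case/existsP => f /andP [/forallP hp /forallP hc].
case/existsP => g /andP [/forallP hp' /forallP hc'].
apply/existsP; exists (f * g)%g; apply/andP; split.
  apply/forallP => h; apply/forallP => h'; rewrite !permM.
  have := hp h => /forallP /(_ h') /eqP ->.
  by have := hp' (f h) => /forallP /(_ (f h')).
apply/forallP => h; rewrite !permM.
by rewrite (eqP (hc h)) (eqP (hc' (f h))).
Qed.

Lemma mkp_val p r x : (mkp p r x : nat) = 3 * p (node x) + (x %% 3 + r (node x)) %% 3.
Proof. by rewrite permE. Qed.

Lemma mkp_eq p r p' r' x : mkp p r x = mkp p' r' x ->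
  p (node x) = p' (node x) /\ r (node x) = r' (node x).
Proof.
move=> e.
have ed : p (node x) = p' (node x).
  by apply: val_inj; rewrite /= -(mkp_div p r x) -(mkp_div p' r' x) e.
split => //.
have := congr1 val e; rewrite /= !mkp_val ed => /eqP; rewrite eqn_add2l => /eqP /eqP.
rewrite eqn_modDl => /eqP; rewrite !modn_small ?ltn_ord //.
exact: val_inj.
Qed.

Lemma node_eq (u v : H) : u %/ 3 == v %/ 3 -> node u = node v.
Proof. by move/eqP => e; apply: val_inj. Qed.

Lemma class_size n (s : {perm H}) : pseudo3 n s -> 0 < n ->
  V`! * 3^V <= #|[set t | pseudo3 n t && graph_iso s t]| * (3 * V).
Proof.
move=> hs hn.
have hs' := hs; case/and3P: hs' => [_ /eqP sfix /forallP scon].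
have [h0 h0f] : exists h0, h0 \in [set h | s h == h].
  by apply/card_gt0P; rewrite sfix.
rewrite inE in h0f.
set K := [set t | pseudo3 n t && graph_iso s t].
pose Phi := fun pr : {perm 'I_V} * {ffun 'I_V -> 'I_3} =>
  (((mkp pr.1 pr.2)^-1 * s * mkp pr.1 pr.2)%g, mkp pr.1 pr.2 h0).
have Phi_inj : injective Phi.
  move=> [p r] [p' r'] [e1 e2] /=.
  set f := mkp p r in e1 e2; set f' := mkp p' r' in e1 e2.
  have allx x : f x = f' x.
    have step : forall u v, f u == f' u -> hadj s u v -> f v == f' v.
      move=> u v /eqP fu /orP [huv|/eqP <-].
        have [ep er] := mkp_eq fu.
        rewrite (node_eq huv) in ep er.
        apply/eqP/val_inj; rewrite /= !mkp_val.
        by rewrite ep er.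
      by rewrite -conjEf e1 fu conjEf.
    apply/eqP; apply: (connect_prop step (x := h0)); last by rewrite e2.
    by have := scon h0 => /forallP; apply.
  have hnode (i : 'I_V) : exists x : H, node x = i.
    have hi : 3 * i < 3 * V by rewrite ltn_pmul2l // ltn_ord.
    exists (Ordinal hi); apply: val_inj; rewrite /= mulnC mulnK //.
  have [ep er] : p =1 p' /\ r =1 r'.
    split => i; have [x <-] := hnode i; by have [] := mkp_eq (allx x).
  by congr (_, _); [apply/permP | apply/ffunP].
have hcard : #|{: {perm 'I_V} * {ffun 'I_V -> 'I_3}}| = V`! * 3^V.
  by rewrite card_prod card_Sn card_ffun !card_ord.
rewrite -hcard -(card_imset _ Phi_inj).
have -> : #|K| * (3 * V) = #|setX K [set: H]| by rewrite cardsX cardsT card_ord.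
apply: subset_leq_card; apply/subsetP => q /imsetP [[p r] _ ->].
rewrite inE /= in_setT andbT inE.
apply/andP; split.
  apply: conj_pseudo3 hs => x y hxy.
  by have := mkp_part p r x y; rewrite hxy => /eqP <-.
apply/existsP; exists (mkp p r); apply/andP; split.
  by apply/forallP => x; apply/forallP => y; exact: mkp_part.
by apply/forallP => h; rewrite conjEf.
Qed.

Lemma classes_bound n : 0 < n ->
  #|graph_classes V n| * (V`! * 3^V) <= 3 * V * #|[set s : {perm H} | pseudo3 n s]|.
Proof.
move=> hn.
set P := [set s : {perm H} | pseudo3 n s].
set C := graph_classes V n.
have hC B : B \in C -> exists2 s, s \in P & B = [set t | pseudo3 n t && graph_iso s t].
  by move/imsetP.
have hsub B : B \in C -> B \subset P.
  case/hC => s _ ->; apply/subsetP => t; rewrite !inE => /andP [] //.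
have triv : trivIset C.
  apply/trivIsetP => A B hA hB; apply: contraR.
  rewrite -setI_eq0 => /set0Pn [u /setIP [hu1 hu2]].
  case/hC: hA hu1 => s1 _ ->; case/hC: hB hu2 => s2 _ ->.
  rewrite !inE => /andP [_ i2] /andP [_ i1].
  apply/eqP/setP => t; rewrite !inE; case: (pseudo3 n t) => //=.
  apply/idP/idP => h.
    exact: iso_trans (iso_trans i2 (iso_sym i1)) h.
  exact: iso_trans (iso_trans i1 (iso_sym i2)) h.
rewrite -sum_nat_const.
apply: (@leq_trans (\sum_(B in C) #|B| * (3 * V))).
  apply: leq_sum => B hB.
  case/hC: (hB) => s hs ->.
  rewrite inE in hs; exact: class_size hs hn.
rewrite -big_distrl /= (eqP triv) mulnC leq_mul2l.
apply/orP; right; apply: subset_leq_card.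
by apply/bigcupsP => B hB; exact: hsub.
Qed.

End Graph.

Theorem proposition2p4 (g n : nat) (hn : 1 <= n) :
  num_pants_graphs g n <= n * g ^ (3 * g) * (3 * g + 3 * n - 3) ^ n.
Proof.
rewrite /num_pants_graphs; case: ifP => h2; last by [].
have hcl := @classes_bound (2 * g + n - 2) n hn.
have [hV0|hV] := eqVneq (2 * g + n - 2) 0.
  move: hcl; rewrite hV0 fact0 expn0 !muln1 mul0n leqn0 => /eqP ->.
  by [].
set V := 2 * g + n - 2 in hcl hV *.
set m := 3 * V.
set k := 3 * g + n - 3.
have hk : 2 * k <= m by rewrite /m /k /V; lia.
have hmk : m - 2 * k = n by rewrite /m /k /V; lia.
have hinv := invs_bound hk; rewrite hmk in hinv.
have hsub : #|[set s : {perm 'I_(3 * V)} | pseudo3 n s]| <= #|invs m n|.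
  apply: subset_leq_card; apply/subsetP => s; rewrite !inE => /and3P [h1 h2' _].
  by rewrite h1 h2'.
have h3 : 3 <= 2 * g + n by move: hV; rewrite /V; lia.
have har := @arith_main g n hn h3.
rewrite /Sf /Tf -/V -/m -/k in har.
set cl := #|graph_classes V n| in hcl *.
set X := #|invs m n| in hinv hsub.
have hZ : 0 < n`! * k`! * 2^k by rewrite !muln_gt0 !fact_gt0 expn_gt0.
have hM : 0 < V`! * 3^V by rewrite muln_gt0 fact_gt0 expn_gt0.
have hMZ : 0 < (V`! * 3^V) * (n`! * k`! * 2^k) by rewrite muln_gt0 hM hZ.
rewrite -(leq_pmul2r hMZ).
apply: (@leq_trans (m * X * (n`! * k`! * 2^k))).
  rewrite mulnA; apply: leq_mul => //.
  apply: leq_trans hcl _; exact: leq_mul.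
apply: (@leq_trans (m * m`!)).
  rewrite -mulnA; apply: leq_mul => //; by rewrite !mulnA.
apply: leq_trans har _.
by rewrite eq_leq //; ring.
Qed.
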